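(* On the round sphere $\mathbb{S}^3$, let $\Phi=[\tilde u,1]$ (a Killing spinor with $\nabla_X\Phi=\tfrac12X\cdot\Phi$), let $V$ be a vector field and $\alpha$ a smooth function, and set $\Psi:=V\cdot\Phi+\alpha\Phi$. Then $\Psi$ is a generalized Killing spinor of unit length if and only if (i) $\alpha^2+|V|^2=1$, (ii) $-V\lrcorner\ast\nabla_VV-V(\alpha)\,V+\alpha\nabla_VV+d\alpha=0$, (iii) $\alpha\ast(V\wedge dV)+(2\alpha-\delta V)(1-\alpha^2)+\alpha V(\alpha)=0$.
   Context: $\mathbb{S}^3\subset\mathbb{H}$ is the unit sphere with round metric, $u(g)=(gi,gj,gk)$ the left-invariant orthonormal frame defining the orientation, $\tilde u$ its lift to the spin bundle, and spinors are written $[\tilde u,f]$ with $f:\mathbb{S}^3\to\mathbb{H}$, Clifford multiplication by $gx$ acting as $f\mapsto xf$. With this convention $X\cdot Y\cdot Z\cdot\Psi=-\Psi$ for any positive orthonormal basis $(X,Y,Z)$, and $\ast X\cdot\Psi=X\cdot\Psi$. Every spinor can be uniquely written as $V\cdot\Phi+\alpha\Phi$. Vectors and $1$-forms are identified via the metric; $\ast$ is the Hodge star, $\delta$ the codifferential (so $\delta V=-\mathrm{div}V$), $dV$ the exterior derivative of the $1$-form dual to $V$, $\lrcorner$ the interior product. A generalized Killing spinor is $\Psi$ with $\nabla_X\Psi=A(X)\cdot\Psi$ for all $X$ for some symmetric endomorphism field $A$. *)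

(* Defs.v *)
From Stdlib Require Import Reals ClassicalEpsilon.
Open Scope R_scope.

Record quat := mkH { qre : R; qi : R; qj : R; qk : R }.

Definition qadd (p q : quat) : quat :=
  mkH (qre p + qre q) (qi p + qi q) (qj p + qj q) (qk p + qk q).
Definition qscal (c : R) (p : quat) : quat :=
  mkH (c * qre p) (c * qi p) (c * qj p) (c * qk p).
Definition qmul (p q : quat) : quat :=
  mkH (qre p * qre q - qi p * qi q - qj p * qj q - qk p * qk q)
      (qre p * qi q + qi p * qre q + qj p * qk q - qk p * qj q)
      (qre p * qj q - qi p * qk q + qj p * qre q + qk p * qi q)
      (qre p * qk q + qi p * qj q - qj p * qi q + qk p * qre q).
Definition qone : quat := mkH 1 0 0 0.
Definition qnorm2 (p : quat) : R :=
  qre p * qre p + qi p * qi p + qj p * qj p + qk p * qk p.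

Definition onS3 (g : quat) : Prop := qnorm2 g = 1.

(** Indices of the left-invariant frame u(g) = (g i, g j, g k). *)
Inductive dir := d1 | d2 | d3.

Definition unitq (a : dir) : quat :=
  match a with d1 => mkH 0 1 0 0 | d2 => mkH 0 0 1 0 | d3 => mkH 0 0 0 1 end.

(** Vectors in frame components: x : dir -> R stands for the tangent vector
    g * (x1 i + x2 j + x3 k) at g; imq x = x1 i + x2 j + x3 k. *)
Definition imq (x : dir -> R) : quat := mkH 0 (x d1) (x d2) (x d3).
Definition sum3 (f : dir -> R) : R := f d1 + f d2 + f d3.
Definition basis (a : dir) : dir -> R :=
  fun b => match a, b with d1,d1 | d2,d2 | d3,d3 => 1 | _,_ => 0 end.
Definition dot (x y : dir -> R) : R := sum3 (fun a => x a * y a).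
Definition cross (x y : dir -> R) : dir -> R :=
  fun c => match c with
           | d1 => x d2 * y d3 - x d3 * y d2
           | d2 => x d3 * y d1 - x d1 * y d3
           | d3 => x d1 * y d2 - x d2 * y d1 end.

(** Flow of the left-invariant field g |-> g e_a : t |-> g exp(t e_a). *)
Definition expq (a : dir) (t : R) : quat :=
  qadd (qscal (cos t) qone) (qscal (sin t) (unitq a)).

Definition has_dir_deriv (F : quat -> R) (a : dir) (g : quat) (l : R) : Prop :=
  derivable_pt_lim (fun t => F (qmul g (expq a t))) 0 l.

Definition ddir (F : quat -> R) (a : dir) (g : quat) : R :=
  epsilon (inhabits 0) (fun l => has_dir_deriv F a g l).

Definition qdist (p q : quat) : R := sqrt (qnorm2 (qadd p (qscal (-1) q))).
Definition continuous_S3 (F : quat -> R) : Prop :=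
  forall g, onS3 g -> forall eps, 0 < eps -> exists delta, 0 < delta /\
    forall h, onS3 h -> qdist h g < delta -> Rabs (F h - F g) < eps.

(** Smoothness on S^3: continuous, and all derivatives along the (smooth,
    global) frame fields exist and are again smooth. *)
CoInductive smooth_S3 (F : quat -> R) : Prop :=
  smooth_S3_intro :
    continuous_S3 F ->
    (forall a, exists DF : quat -> R,
        (forall g, onS3 g -> has_dir_deriv F a g (DF g)) /\ smooth_S3 DF) ->
    smooth_S3 F.

Definition vder (x : dir -> R) (F : quat -> R) (g : quat) : R :=
  sum3 (fun a => x a * ddir F a g).

(** Vector fields: V g : dir -> R are the frame components at g. *)
Definition vcomp (V : quat -> dir -> R) (b : dir) : quat -> R := fun g => V g b.

(** Levi-Civita connection of the round metric: for left-invariant fields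
    nabla_{e_a} e_b = e_a x e_b, hence nabla_X V = X(V^b) e_b + x x V. *)
Definition covV (V : quat -> dir -> R) (g : quat) (x : dir -> R) : dir -> R :=
  fun b => vder x (vcomp V b) g + cross x (V g) b.

(** Lie bracket of left-invariant fields: [g x, g y] = g (xy - yx) = g (2 x cross y). *)
Definition lie (x y : dir -> R) : dir -> R := fun c => 2 * cross x y c.

(** 2-forms: w = f23 e^2/\e^3 + f31 e^3/\e^1 + f12 e^1/\e^2. *)
Record form2 := F2 { f23 : R; f31 : R; f12 : R }.
Definition eval2 (w : form2) (x y : dir -> R) : R :=
  f23 w * (x d2 * y d3 - x d3 * y d2) + f31 w * (x d3 * y d1 - x d1 * y d3)
  + f12 w * (x d1 * y d2 - x d2 * y d1).
Definition interior_prod (x : dir -> R) (w : form2) : dir -> R :=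
  fun b => eval2 w x (basis b).
Definition hodge1 (x : dir -> R) : form2 := F2 (x d1) (x d2) (x d3).
(** Wedge of a 1-form and a 2-form: coefficient of e^1/\e^2/\e^3;
    the Hodge star of c e^1/\e^2/\e^3 is c. *)
Definition wedge12 (x : dir -> R) (w : form2) : R :=
  x d1 * f23 w + x d2 * f31 w + x d3 * f12 w.

(** Exterior derivative of the 1-form dual to V:
    dV(e_a,e_b) = e_a(V_b) - e_b(V_a) - V([e_a,e_b]). *)
Definition dform_ab (V : quat -> dir -> R) (g : quat) (a b : dir) : R :=
  ddir (vcomp V b) a g - ddir (vcomp V a) b g - dot (V g) (lie (basis a) (basis b)).
Definition dV (V : quat -> dir -> R) (g : quat) : form2 :=
  F2 (dform_ab V g d2 d3) (dform_ab V g d3 d1) (dform_ab V g d1 d2).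

(** Codifferential: delta V = - div V = - sum_a <nabla_{e_a} V, e_a>. *)
Definition codiff (V : quat -> dir -> R) (g : quat) : R :=
  - sum3 (fun a => covV V g (basis a) a).

Definition grad (F : quat -> R) (g : quat) : dir -> R := fun a => ddir F a g.

(** Spinors [u~, f] with f : S^3 -> H.  Clifford multiplication by g x is
    f |-> x f.  Spinor covariant derivative in the trivialisation u~:
    nabla_X [u~, f] = [u~, X(f) + 1/2 x f]
    (spin lift of nabla_{e_a} e_b = e_a x e_b; then Phi=[u~,1] is Killing). *)
Definition ddirH (f : quat -> quat) (a : dir) (g : quat) : quat :=
  mkH (ddir (fun h => qre (f h)) a g) (ddir (fun h => qi (f h)) a g)
      (ddir (fun h => qj (f h)) a g) (ddir (fun h => qk (f h)) a g).
Definition vderH (x : dir -> R) (f : quat -> quat) (g : quat) : quat :=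
  qadd (qscal (x d1) (ddirH f d1 g))
       (qadd (qscal (x d2) (ddirH f d2 g)) (qscal (x d3) (ddirH f d3 g))).
Definition clifford (x : dir -> R) (s : quat) : quat := qmul (imq x) s.
Definition spin_nabla (f : quat -> quat) (g : quat) (x : dir -> R) : quat :=
  qadd (vderH x f g) (qscal (1/2) (clifford x (f g))).

Definition Phi : quat -> quat := fun _ => qone.

Definition matvec (M : dir -> dir -> R) (x : dir -> R) : dir -> R :=
  fun b => sum3 (fun a => M b a * x a).
Definition gen_killing (f : quat -> quat) : Prop :=
  exists A : quat -> dir -> dir -> R,
    forall g, onS3 g ->
      (forall a b, A g a b = A g b a) /\
      (forall x : dir -> R, spin_nabla f g x = clifford (matvec (A g) x) (f g)).

Definition unit_length (f : quat -> quat) : Prop :=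
  forall g, onS3 g -> qnorm2 (f g) = 1.

(* Main.v *)
From Stdlib Require Import Reals Lra Psatz ClassicalEpsilon Classical FunctionalExtensionality.
Require Import Defs.
Open Scope R_scope.

Definition wv (V : quat -> dir -> R) g b a := ddir (vcomp V b) a g.
Definition da (alpha : quat -> R) g a := ddir alpha a g.

Definition Ev (V : quat -> dir -> R) (alpha : quat -> R) g (k : dir) : R :=
  match k with
  | d1 => - alpha g * (wv V g d3 d2 - wv V g d2 d3) + (da alpha g d2 * V g d3 - da alpha g d3 * V g d2)
          + (wv V g d1 d1 * V g d1 + wv V g d1 d2 * V g d2 + wv V g d1 d3 * V g d3)
          - (wv V g d1 d1 + wv V g d2 d2 + wv V g d3 d3) * V g d1
  | d2 => - alpha g * (wv V g d1 d3 - wv V g d3 d1) + (da alpha g d3 * V g d1 - da alpha g d1 * V g d3)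
          + (wv V g d2 d1 * V g d1 + wv V g d2 d2 * V g d2 + wv V g d2 d3 * V g d3)
          - (wv V g d1 d1 + wv V g d2 d2 + wv V g d3 d3) * V g d2
  | d3 => - alpha g * (wv V g d2 d1 - wv V g d1 d2) + (da alpha g d1 * V g d2 - da alpha g d2 * V g d1)
          + (wv V g d3 d1 * V g d1 + wv V g d3 d2 * V g d2 + wv V g d3 d3 * V g d3)
          - (wv V g d1 d1 + wv V g d2 d2 + wv V g d3 d3) * V g d3
  end.

Definition Kc (V : quat -> dir -> R) (alpha : quat -> R) g k :=
  alpha g * da alpha g k + (V g d1 * wv V g d1 k + V g d2 * wv V g d2 k + V g d3 * wv V g d3 k).
Definition Uv (V : quat -> dir -> R) (alpha : quat -> R) g := alpha g ^ 2 + dot (V g) (V g) - 1.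

Definition Amat (V : quat -> dir -> R) (alpha : quat -> R) g (c a : dir) : R :=
  alpha g * wv V g c a - da alpha g a * V g c - cross (fun b => wv V g b a) (V g) c + basis a c / 2.

Definition Psi_of (V : quat -> dir -> R) (alpha : quat -> R) : quat -> quat :=
  fun g => qadd (clifford (V g) (Phi g)) (qscal (alpha g) (Phi g)).

Ltac unf := unfold interior_prod, hodge1, eval2, covV, vder, grad, cross, Ev, Kc, Uv,
  dot, sum3, basis, wedge12, dV, dform_ab, lie, codiff, Amat in *.

Lemma ii_id V alpha g b :
  (- (interior_prod (V g) (hodge1 (covV V g (V g))) b) - vder (V g) alpha g * V g b
   + alpha g * covV V g (V g) b + grad alpha g b)
  + cross (Ev V alpha g) (V g) b + da alpha g b * Uv V alpha g - alpha g * Kc V alpha g b = 0.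
Proof. destruct b; unf; unf; unf; unfold da, wv; simpl; ring. Qed.

Lemma iii_id V alpha g :
  (alpha g * wedge12 (V g) (dV V g) + (2 * alpha g - codiff V g) * (1 - alpha g ^ 2)
   + alpha g * vder (V g) alpha g)
  + (Ev V alpha g d1 * V g d1 + Ev V alpha g d2 * V g d2 + Ev V alpha g d3 * V g d3)
  + (2 * alpha g + (wv V g d1 d1 + wv V g d2 d2 + wv V g d3 d3)) * Uv V alpha g
  - (V g d1 * Kc V alpha g d1 + V g d2 * Kc V alpha g d2 + V g d3 * Kc V alpha g d3) = 0.
Proof. unf; unf; unf; unf; unf; unfold da, wv; simpl; ring. Qed.

Lemma sym_id V alpha g :
  Amat V alpha g d2 d3 - Amat V alpha g d3 d2 = Ev V alpha g d1 /\
  Amat V alpha g d3 d1 - Amat V alpha g d1 d3 = Ev V alpha g d2 /\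
  Amat V alpha g d1 d2 - Amat V alpha g d2 d1 = Ev V alpha g d3.
Proof. unf; unf; unf; unfold da, wv; simpl; repeat split; ring. Qed.

Lemma PsiR V alpha : (fun h => qre (Psi_of V alpha h)) = alpha.
Proof. apply functional_extensionality; intro h; unfold Psi_of, clifford, Phi, qadd, qscal, qmul, imq, qone; simpl; ring. Qed.
Lemma PsiI V alpha : (fun h => qi (Psi_of V alpha h)) = vcomp V d1.
Proof. apply functional_extensionality; intro h; unfold vcomp, Psi_of, clifford, Phi, qadd, qscal, qmul, imq, qone; simpl; ring. Qed.
Lemma PsiJ V alpha : (fun h => qj (Psi_of V alpha h)) = vcomp V d2.
Proof. apply functional_extensionality; intro h; unfold vcomp, Psi_of, clifford, Phi, qadd, qscal, qmul, imq, qone; simpl; ring. Qed.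
Lemma PsiK V alpha : (fun h => qk (Psi_of V alpha h)) = vcomp V d3.
Proof. apply functional_extensionality; intro h; unfold vcomp, Psi_of, clifford, Phi, qadd, qscal, qmul, imq, qone; simpl; ring. Qed.
Lemma PsiG V alpha g : Psi_of V alpha g = mkH (alpha g) (V g d1) (V g d2) (V g d3).
Proof. unfold Psi_of, clifford, Phi, qadd, qscal, qmul, imq, qone; simpl; f_equal; ring. Qed.

Lemma spin_expand V alpha g x :
  spin_nabla (Psi_of V alpha) g x =
  qadd (qadd (qscal (x d1) (mkH (da alpha g d1) (wv V g d1 d1) (wv V g d2 d1) (wv V g d3 d1)))
        (qadd (qscal (x d2) (mkH (da alpha g d2) (wv V g d1 d2) (wv V g d2 d2) (wv V g d3 d2)))
              (qscal (x d3) (mkH (da alpha g d3) (wv V g d1 d3) (wv V g d2 d3) (wv V g d3 d3)))))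
   (qscal (1/2) (clifford x (mkH (alpha g) (V g d1) (V g d2) (V g d3)))).
Proof.
  unfold spin_nabla, vderH, ddirH. rewrite PsiR, PsiI, PsiJ, PsiK, PsiG. reflexivity.
Qed.

Lemma A_works V alpha g x :
  (forall k, Kc V alpha g k = 0) -> Uv V alpha g = 0 ->
  spin_nabla (Psi_of V alpha) g x = clifford (matvec (Amat V alpha g) x) (Psi_of V alpha g).
Proof.
  intros HK HU. rewrite spin_expand, PsiG.
  pose proof (HK d1) as K1; pose proof (HK d2) as K2; pose proof (HK d3) as K3.
  unfold Kc, Uv in *. unf; unf. unfold da, wv in *. simpl in *.
  unfold clifford, matvec, qadd, qscal, qmul, imq. unfold sum3. simpl.
  pose proof (f_equal (fun z => x d1 * alpha g * z) K1) as P1.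
  pose proof (f_equal (fun z => x d2 * alpha g * z) K2) as P2.
  pose proof (f_equal (fun z => x d3 * alpha g * z) K3) as P3.
  pose proof (f_equal (fun z => x d1 * ddir alpha d1 g * z) HU) as Q1.
  pose proof (f_equal (fun z => x d2 * ddir alpha d2 g * z) HU) as Q2.
  pose proof (f_equal (fun z => x d3 * ddir alpha d3 g * z) HU) as Q3.
  pose proof (f_equal (fun z => x d1 * V g d1 * z) K1) as Rd1d1.
  pose proof (f_equal (fun z => x d1 * ddir (vcomp V d1) d1 g * z) HU) as Sd1d1.
  pose proof (f_equal (fun z => x d1 * V g d2 * z) K1) as Rd1d2.
  pose proof (f_equal (fun z => x d1 * ddir (vcomp V d2) d1 g * z) HU) as Sd1d2.
  pose proof (f_equal (fun z => x d1 * V g d3 * z) K1) as Rd1d3.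
  pose proof (f_equal (fun z => x d1 * ddir (vcomp V d3) d1 g * z) HU) as Sd1d3.
  pose proof (f_equal (fun z => x d2 * V g d1 * z) K2) as Rd2d1.
  pose proof (f_equal (fun z => x d2 * ddir (vcomp V d1) d2 g * z) HU) as Sd2d1.
  pose proof (f_equal (fun z => x d2 * V g d2 * z) K2) as Rd2d2.
  pose proof (f_equal (fun z => x d2 * ddir (vcomp V d2) d2 g * z) HU) as Sd2d2.
  pose proof (f_equal (fun z => x d2 * V g d3 * z) K2) as Rd2d3.
  pose proof (f_equal (fun z => x d2 * ddir (vcomp V d3) d2 g * z) HU) as Sd2d3.
  pose proof (f_equal (fun z => x d3 * V g d1 * z) K3) as Rd3d1.
  pose proof (f_equal (fun z => x d3 * ddir (vcomp V d1) d3 g * z) HU) as Sd3d1.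
  pose proof (f_equal (fun z => x d3 * V g d2 * z) K3) as Rd3d2.
  pose proof (f_equal (fun z => x d3 * ddir (vcomp V d2) d3 g * z) HU) as Sd3d2.
  pose proof (f_equal (fun z => x d3 * V g d3 * z) K3) as Rd3d3.
  pose proof (f_equal (fun z => x d3 * ddir (vcomp V d3) d3 g * z) HU) as Sd3d3.
  cbv beta in *. f_equal; lra.
Qed.

Lemma A_recover V alpha g a u :
  Uv V alpha g = 0 ->
  spin_nabla (Psi_of V alpha) g (basis a) = clifford u (Psi_of V alpha g) ->
  forall c, u c = Amat V alpha g c a.
Proof.
  intros HU H c. rewrite spin_expand, PsiG in H.
  pose proof (f_equal qre H) as H0; pose proof (f_equal qi H) as H1;
  pose proof (f_equal qj H) as H2; pose proof (f_equal qk H) as H3.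
  clear H.
  unfold Uv in HU; unf; unf. unfold da, wv in *.
  unfold clifford, matvec, qadd, qscal, qmul, imq in *. simpl in *.
  pose proof (f_equal (fun z => u c * z) HU) as P.
  pose proof (f_equal (fun z => alpha g * z) H0) as A0.
  pose proof (f_equal (fun z => alpha g * z) H1) as A1.
  pose proof (f_equal (fun z => alpha g * z) H2) as A2.
  pose proof (f_equal (fun z => alpha g * z) H3) as A3.
  pose proof (f_equal (fun z => V g d1 * z) H0) as B10.
  pose proof (f_equal (fun z => V g d1 * z) H1) as B11.
  pose proof (f_equal (fun z => V g d1 * z) H2) as B12.
  pose proof (f_equal (fun z => V g d1 * z) H3) as B13.
  pose proof (f_equal (fun z => V g d2 * z) H0) as B20.
  pose proof (f_equal (fun z => V g d2 * z) H1) as B21.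
  pose proof (f_equal (fun z => V g d2 * z) H2) as B22.
  pose proof (f_equal (fun z => V g d2 * z) H3) as B23.
  pose proof (f_equal (fun z => V g d3 * z) H0) as B30.
  pose proof (f_equal (fun z => V g d3 * z) H1) as B31.
  pose proof (f_equal (fun z => V g d3 * z) H2) as B32.
  pose proof (f_equal (fun z => V g d3 * z) H3) as B33.
  cbv beta in *.
  destruct a, c; simpl in *; lra.
Qed.

Lemma ddir_eq F a g l : has_dir_deriv F a g l -> ddir F a g = l.
Proof.
  intro H. unfold ddir. apply (uniqueness_limite (fun t => F (qmul g (expq a t))) 0).
  - exact (epsilon_spec (inhabits 0) (fun l => has_dir_deriv F a g l) (ex_intro _ l H)).
  - exact H.
Qed.

Lemma smooth_cont F : smooth_S3 F -> continuous_S3 F.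
Proof. intro H; destruct H; auto. Qed.

Lemma ddir_spec F a g : smooth_S3 F -> onS3 g -> has_dir_deriv F a g (ddir F a g).
Proof.
  intros H Hg. destruct H as [_ H]. destruct (H a) as [DF [HD _]].
  rewrite (ddir_eq _ _ _ _ (HD g Hg)). apply HD; auto.
Qed.

Lemma qnorm2_mul p q : qnorm2 (qmul p q) = qnorm2 p * qnorm2 q.
Proof. destruct p, q; unfold qnorm2, qmul; simpl; ring. Qed.

Lemma onS3_curve g a t : onS3 g -> onS3 (qmul g (expq a t)).
Proof.
  unfold onS3; intro H; rewrite qnorm2_mul, H.
  pose proof (sin2_cos2 t) as S. unfold Rsqr in S.
  destruct a; unfold expq, qadd, qscal, qone, unitq, qnorm2; simpl; lra.
Qed.

Lemma curve0 g a : qmul g (expq a 0) = g.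
Proof.
  unfold expq; rewrite cos_0, sin_0.
  destruct g, a; unfold qadd, qscal, qone, unitq, qmul; simpl; f_equal; ring.
Qed.

Lemma const_deriv_zero f l : derivable_pt_lim f 0 l -> (forall t, f t = 1) -> l = 0.
Proof.
  intros D H. assert (E : f = fct_cte 1).
  { apply functional_extensionality; intro t; rewrite H; reflexivity. }
  subst f. exact (uniqueness_limite _ _ _ _ D (derivable_pt_lim_const 1 0)).
Qed.

Lemma constraint0 (V : quat -> dir -> R) alpha g k :
  (forall b, smooth_S3 (vcomp V b)) -> smooth_S3 alpha ->
  (forall h, onS3 h -> alpha h ^ 2 + dot (V h) (V h) = 1) -> onS3 g ->
  alpha g * ddir alpha k g + (V g d1 * ddir (vcomp V d1) k g + V g d2 * ddir (vcomp V d2) k g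
    + V g d3 * ddir (vcomp V d3) k g) = 0.
Proof.
  intros HV Ha Hu Hg.
  pose proof (ddir_spec alpha k g Ha Hg) as dA.
  pose proof (ddir_spec _ k g (HV d1) Hg) as dV1.
  pose proof (ddir_spec _ k g (HV d2) Hg) as dV2.
  pose proof (ddir_spec _ k g (HV d3) Hg) as dV3.
  unfold has_dir_deriv in *.
  pose proof (derivable_pt_lim_plus _ _ _ _ _ (derivable_pt_lim_mult _ _ _ _ _ dA dA)
     (derivable_pt_lim_plus _ _ _ _ _ (derivable_pt_lim_mult _ _ _ _ _ dV1 dV1)
     (derivable_pt_lim_plus _ _ _ _ _ (derivable_pt_lim_mult _ _ _ _ _ dV2 dV2)
                                      (derivable_pt_lim_mult _ _ _ _ _ dV3 dV3)))) as D.
  apply const_deriv_zero in D.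
  - rewrite curve0 in D. unfold vcomp in *. lra.
  - intro t. unfold plus_fct, mult_fct. pose proof (Hu _ (onS3_curve g k t Hg)) as X.
    unfold dot, sum3, vcomp in *. simpl in *. lra.
Qed.

Lemma cont_ext F G : (forall h, onS3 h -> F h = G h) -> continuous_S3 F -> continuous_S3 G.
Proof.
  intros E C g Hg eps He. destruct (C g Hg eps He) as [d [Hd Hc]].
  exists d; split; auto. intros h Hh Hdh. rewrite <- !E; auto.
Qed.

Lemma cont_plus f g : continuous_S3 f -> continuous_S3 g -> continuous_S3 (fun h => f h + g h).
Proof.
  intros Cf Cg x Hx eps He.
  destruct (Cf x Hx (eps/2)) as [d1 [Hd1 H1]]; [lra|].
  destruct (Cg x Hx (eps/2)) as [d2 [Hd2 H2]]; [lra|].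
  exists (Rmin d1 d2); split; [apply Rmin_pos; auto|].
  intros h Hh Hd. pose proof (Rmin_l d1 d2); pose proof (Rmin_r d1 d2).
  specialize (H1 h Hh ltac:(lra)); specialize (H2 h Hh ltac:(lra)).
  replace (f h + g h - (f x + g x)) with ((f h - f x) + (g h - g x)) by ring.
  eapply Rle_lt_trans; [apply Rabs_triang|]. lra.
Qed.

Lemma cont_opp f : continuous_S3 f -> continuous_S3 (fun h => - f h).
Proof.
  intros Cf x Hx eps He. destruct (Cf x Hx eps He) as [d [Hd H]].
  exists d; split; auto. intros h Hh Hdh.
  replace (- f h - - f x) with (- (f h - f x)) by ring. rewrite Rabs_Ropp; auto.
Qed.

Lemma cont_minus f g : continuous_S3 f -> continuous_S3 g -> continuous_S3 (fun h => f h - g h).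
Proof. intros Cf Cg. apply (cont_plus f (fun h => - g h)); auto. apply cont_opp; auto. Qed.

Lemma cont_mult f g : continuous_S3 f -> continuous_S3 g -> continuous_S3 (fun h => f h * g h).
Proof.
  intros Cf Cg x Hx eps He.
  set (M := Rabs (f x) + Rabs (g x) + 1).
  assert (HM : 0 < M) by (unfold M; pose proof (Rabs_pos (f x)); pose proof (Rabs_pos (g x)); lra).
  set (e := Rmin 1 (eps / (4 * M))).
  assert (He1 : 0 < e) by (apply Rmin_pos; [lra| apply Rdiv_lt_0_compat; lra]).
  destruct (Cf x Hx e He1) as [d1 [Hd1 H1]].
  destruct (Cg x Hx e He1) as [d2 [Hd2 H2]].
  exists (Rmin d1 d2); split; [apply Rmin_pos; auto|].
  intros h Hh Hd. pose proof (Rmin_l d1 d2); pose proof (Rmin_r d1 d2).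
  specialize (H1 h Hh ltac:(lra)); specialize (H2 h Hh ltac:(lra)).
  pose proof (Rmin_l 1 (eps / (4 * M))) as E1. pose proof (Rmin_r 1 (eps / (4 * M))) as E2.
  fold e in E1, E2.
  assert (Hfh : Rabs (f h) <= M).
  { replace (f h) with (f x + (f h - f x)) by ring.
    eapply Rle_trans; [apply Rabs_triang|]. unfold M; pose proof (Rabs_pos (g x)); lra. }
  replace (f h * g h - f x * g x) with (f h * (g h - g x) + g x * (f h - f x)) by ring.
  eapply Rle_lt_trans; [apply Rabs_triang|]. rewrite !Rabs_mult.
  assert (Hgx : Rabs (g x) <= M) by (unfold M; pose proof (Rabs_pos (f x)); lra).
  assert (A1 : Rabs (f h) * Rabs (g h - g x) <= M * e).
  { apply Rmult_le_compat; auto using Rabs_pos; lra. }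
  assert (A2 : Rabs (g x) * Rabs (f h - f x) <= M * e).
  { apply Rmult_le_compat; auto using Rabs_pos; lra. }
  assert (A3 : M * e <= M * (eps / (4 * M))) by (apply Rmult_le_compat_l; lra).
  assert (A4 : M * (eps / (4 * M)) = eps / 4) by (field; lra).
  lra.
Qed.

Lemma cont_ddir F a : smooth_S3 F -> continuous_S3 (fun h => ddir F a h).
Proof.
  intro H. destruct H as [_ H]. destruct (H a) as [DF [HD HS]].
  apply (cont_ext DF). - intros h Hh. symmetry. apply ddir_eq. auto.
  - apply smooth_cont; auto.
Qed.

Lemma curve_close g a delta : onS3 g -> 0 < delta ->
  exists d, 0 < d /\ forall t, Rabs t < d -> qdist (qmul g (expq a t)) g < delta.
Proof.
  intros Hg Hd. pose proof (continuity_cos 0) as C.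
  unfold continuity_pt, continue_in, limit1_in, limit_in in C.
  destruct (C (delta * delta / 2)) as [alp [Halp Hc]].
  { apply Rdiv_lt_0_compat; nra. }
  exists alp; split; auto. intros t Ht.
  assert (Hc' : Rabs (cos t - 1) < delta * delta / 2).
  { destruct (Req_dec t 0) as [->|Hn].
    - rewrite cos_0. replace (1 - 1) with 0 by ring. rewrite Rabs_R0. nra.
    - assert (Hdt : D_x no_cond 0 t /\ dist R_met t 0 < alp).
      { split. split. exact I. auto. simpl. unfold R_dist. rewrite Rminus_0_r. exact Ht. }
      specialize (Hc t Hdt). simpl in Hc. unfold R_dist in Hc. rewrite cos_0 in Hc. exact Hc. }
  clear Hc. rename Hc' into Hc.
  assert (Q : qnorm2 (qadd (qmul g (expq a t)) (qscal (-1) g)) = qnorm2 g * ((cos t - 1)^2 + sin t ^ 2)).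
  { destruct a, g; unfold qnorm2, qadd, qmul, qscal, expq, qone, unitq; simpl; ring. }
  unfold onS3 in Hg. rewrite Hg in Q.
  pose proof (sin2_cos2 t) as S. unfold Rsqr in S.
  unfold qdist. rewrite Q.
  rewrite <- (sqrt_square delta) by lra.
  apply sqrt_lt_1_alt. split.
  - nra.
  - apply Rabs_def2 in Hc. nra.
Qed.

Lemma qdist_refl g : qdist g g = 0.
Proof.
  unfold qdist. replace (qnorm2 (qadd g (qscal (-1) g))) with 0. apply sqrt_0.
  destruct g; unfold qnorm2, qadd, qscal; simpl; ring.
Qed.

Lemma ddir_local_zero F a g delta : smooth_S3 F -> onS3 g -> 0 < delta ->
  (forall h, onS3 h -> qdist h g < delta -> F h = 0) -> ddir F a g = 0.
Proof.
  intros HF Hg Hd Hz.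
  pose proof (ddir_spec F a g HF Hg) as D. set (l := ddir F a g) in *.
  destruct (Req_dec l 0) as [|Hl]; auto. exfalso.
  destruct (curve_close g a delta Hg Hd) as [d2 [Hd2 Hc]].
  destruct (D (Rabs l) (Rabs_pos_lt l Hl)) as [d1 Hd1].
  pose proof (cond_pos d1) as Hp.
  set (t := Rmin d1 d2 / 2).
  assert (Ht0 : 0 < t) by (unfold t; pose proof (Rmin_pos _ _ Hp Hd2); lra).
  assert (Ht1 : t < d1) by (unfold t; pose proof (Rmin_l d1 d2); lra).
  assert (Ht2 : t < d2) by (unfold t; pose proof (Rmin_r d1 d2); lra).
  specialize (Hd1 t ltac:(lra) ltac:(rewrite Rabs_pos_eq; lra)).
  rewrite Rplus_0_l, curve0 in Hd1.
  rewrite (Hz g Hg) in Hd1 by (rewrite qdist_refl; lra).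
  rewrite (Hz _ (onS3_curve g a t Hg)) in Hd1 by (apply Hc; rewrite Rabs_pos_eq; lra).
  replace ((0 - 0) / t - l) with (- l) in Hd1 by (field; lra).
  rewrite Rabs_Ropp in Hd1. lra.
Qed.

Lemma norm_Psi V alpha g : qnorm2 (Psi_of V alpha g) = alpha g ^ 2 + dot (V g) (V g).
Proof. rewrite PsiG; unfold qnorm2, dot, sum3; simpl; ring. Qed.

Lemma Kc_zero V alpha g k :
  (forall b, smooth_S3 (vcomp V b)) -> smooth_S3 alpha ->
  (forall h, onS3 h -> alpha h ^ 2 + dot (V h) (V h) = 1) -> onS3 g -> Kc V alpha g k = 0.
Proof. intros. unfold Kc, da, wv. apply constraint0; auto. Qed.

Lemma matvec_basis M a c : matvec M (basis a) c = M c a.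
Proof. destruct a; unfold matvec, sum3, basis; simpl; ring. Qed.

Lemma alg_E (e v : dir -> R) : (forall b, cross e v b = 0) ->
  e d1 * v d1 + e d2 * v d2 + e d3 * v d3 = 0 -> dot v v <> 0 -> forall k, e k = 0.
Proof.
  intros HC HD Hn k. pose proof (HC d1) as C1; pose proof (HC d2) as C2; pose proof (HC d3) as C3.
  unfold cross in *. simpl in *.
  assert (e k * dot v v = 0).
  { unfold dot, sum3.
    pose proof (f_equal (fun z => v d1 * z) HD). pose proof (f_equal (fun z => v d2 * z) HD).
    pose proof (f_equal (fun z => v d3 * z) HD).
    pose proof (f_equal (fun z => v d1 * z) C1). pose proof (f_equal (fun z => v d2 * z) C1).
    pose proof (f_equal (fun z => v d3 * z) C1).
    pose proof (f_equal (fun z => v d1 * z) C2). pose proof (f_equal (fun z => v d2 * z) C2).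
    pose proof (f_equal (fun z => v d3 * z) C2).
    pose proof (f_equal (fun z => v d1 * z) C3). pose proof (f_equal (fun z => v d2 * z) C3).
    pose proof (f_equal (fun z => v d3 * z) C3).
    cbv beta in *. destruct k; lra. }
  destruct (Rmult_integral _ _ H); auto. contradiction.
Qed.

Definition conds V alpha g :=
     alpha g ^ 2 + dot (V g) (V g) = 1 /\
     (forall b : dir,
        - (interior_prod (V g) (hodge1 (covV V g (V g))) b)
        - vder (V g) alpha g * V g b
        + alpha g * covV V g (V g) b
        + grad alpha g b = 0) /\
     alpha g * wedge12 (V g) (dV V g)
     + (2 * alpha g - codiff V g) * (1 - alpha g ^ 2)
     + alpha g * vder (V g) alpha g = 0.

Lemma nondeg V alpha h :
  (forall b, smooth_S3 (vcomp V b)) -> smooth_S3 alpha ->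
  (forall g, onS3 g -> conds V alpha g) -> onS3 h -> dot (V h) (V h) <> 0 ->
  forall k, Ev V alpha h k = 0.
Proof.
  intros HV Ha H Hh Hn.
  assert (Hu : forall g, onS3 g -> alpha g ^ 2 + dot (V g) (V g) = 1) by (intros g Hg; apply H; auto).
  assert (HK : forall k, Kc V alpha h k = 0) by (intro; apply Kc_zero; auto).
  assert (HU : Uv V alpha h = 0) by (unfold Uv; rewrite (Hu h Hh); ring).
  destruct (H h Hh) as [_ [Hii Hiii]].
  apply (alg_E (Ev V alpha h) (V h)).
  - intro b. pose proof (ii_id V alpha h b) as X. rewrite HU, HK, (Hii b) in X. lra.
  - pose proof (iii_id V alpha h) as X. rewrite HU, !HK, Hiii in X. lra.
  - auto.
Qed.

Lemma cont_Ev V alpha k :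
  (forall b, smooth_S3 (vcomp V b)) -> smooth_S3 alpha -> continuous_S3 (fun h => Ev V alpha h k).
Proof.
  intros HV Ha. destruct k; unfold Ev, wv, da;
  repeat (apply cont_plus || apply cont_minus || apply cont_mult || apply cont_opp);
  first [ apply cont_ddir; auto
        | exact (smooth_cont _ Ha)
        | match goal with |- continuous_S3 (fun h => V h ?b) => exact (smooth_cont _ (HV b)) end ].
Qed.

Lemma E_zero V alpha g :
  (forall b, smooth_S3 (vcomp V b)) -> smooth_S3 alpha ->
  (forall g, onS3 g -> conds V alpha g) -> onS3 g -> forall k, Ev V alpha g k = 0.
Proof.
  intros HV Ha H Hg k.
  destruct (classic (dot (V g) (V g) = 0)) as [Hz|Hnz]; [|apply nondeg; auto].
  destruct (classic (exists delta, 0 < delta /\ forall h, onS3 h -> qdist h g < delta -> dot (V h) (V h) = 0))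
    as [[delta [Hdel Hball]] | Hnot].
  - assert (Hv : forall h, onS3 h -> qdist h g < delta -> forall b, V h b = 0).
    { intros h Hh Hd b. specialize (Hball h Hh Hd). unfold dot, sum3 in Hball.
      destruct b; nra. }
    assert (HW : forall b a, ddir (vcomp V b) a g = 0).
    { intros b a. apply (ddir_local_zero _ a g delta); auto.
      intros h Hh Hd. unfold vcomp. apply Hv; auto. }
    assert (Hv0 : forall b, V g b = 0) by (apply Hv; auto; rewrite qdist_refl; lra).
    destruct k; unfold Ev, wv, da; rewrite !HW, !Hv0; ring.
  - destruct (Req_dec (Ev V alpha g k) 0) as [|Hne]; auto. exfalso.
    destruct (cont_Ev V alpha k HV Ha g Hg (Rabs (Ev V alpha g k)) (Rabs_pos_lt _ Hne)) as [d [Hd Hc]].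
    apply Hnot. exists d. split; auto. intros h Hh Hdh.
    apply NNPP. intro Hnz.
    specialize (Hc h Hh Hdh). rewrite (nondeg V alpha h HV Ha H Hh Hnz k) in Hc.
    rewrite Rminus_0_l, Rabs_Ropp in Hc. lra.
Qed.

Lemma main V alpha :
  (forall b, smooth_S3 (vcomp V b)) -> smooth_S3 alpha ->
  (gen_killing (Psi_of V alpha) /\ unit_length (Psi_of V alpha)) <->
  (forall g, onS3 g -> conds V alpha g).
Proof.
  intros HV Ha. split.
  - intros [[A HA] HUL] g Hg.
    assert (Hu : forall h, onS3 h -> alpha h ^ 2 + dot (V h) (V h) = 1)
      by (intros h Hh; rewrite <- norm_Psi; apply HUL; auto).
    assert (HK : forall k, Kc V alpha g k = 0) by (intro; apply Kc_zero; auto).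
    assert (HU : Uv V alpha g = 0) by (unfold Uv; rewrite (Hu g Hg); ring).
    destruct (HA g Hg) as [Hsym Heq].
    assert (Hcol : forall a c, A g c a = Amat V alpha g c a).
    { intros a c. rewrite <- matvec_basis. apply A_recover; auto. }
    destruct (sym_id V alpha g) as [S1 [S2 S3]].
    assert (HE : forall k, Ev V alpha g k = 0).
    { intro k; destruct k.
      - rewrite <- S1, <- !Hcol, (Hsym d2 d3); ring.
      - rewrite <- S2, <- !Hcol, (Hsym d3 d1); ring.
      - rewrite <- S3, <- !Hcol, (Hsym d1 d2); ring. }
    assert (HC : forall b, cross (Ev V alpha g) (V g) b = 0)
      by (intro b; destruct b; unfold cross; rewrite !HE; ring).
    split; [auto|split].
    + intro b. pose proof (ii_id V alpha g b) as X. rewrite HC, HU, HK in X. lra.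
    + pose proof (iii_id V alpha g) as X. rewrite !HE, HU, !HK in X. lra.
  - intros H. split.
    + exists (Amat V alpha). intros g Hg.
      assert (Hu : forall h, onS3 h -> alpha h ^ 2 + dot (V h) (V h) = 1) by (intros h Hh; apply H; auto).
      assert (HK : forall k, Kc V alpha g k = 0) by (intro; apply Kc_zero; auto).
      assert (HU : Uv V alpha g = 0) by (unfold Uv; rewrite (Hu g Hg); ring).
      pose proof (E_zero V alpha g HV Ha H Hg) as HE.
      destruct (sym_id V alpha g) as [S1 [S2 S3]].
      split.
      * intros a b. pose proof (HE d1); pose proof (HE d2); pose proof (HE d3).
        destruct a, b; try reflexivity; lra.
      * intro x. apply A_works; auto.
    + intros g Hg. rewrite norm_Psi. apply H; auto.
Qed.

Theorem proposition5p1 (V : quat -> dir -> R) (alpha : quat -> R) :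
  (forall b, smooth_S3 (vcomp V b)) -> smooth_S3 alpha ->
  let Psi := fun g => qadd (clifford (V g) (Phi g)) (qscal (alpha g) (Phi g)) in
  (gen_killing Psi /\ unit_length Psi) <->
  (forall g, onS3 g ->
     (* (i) *)
     alpha g ^ 2 + dot (V g) (V g) = 1 /\
     (* (ii) *)
     (forall b : dir,
        - (interior_prod (V g) (hodge1 (covV V g (V g))) b)
        - vder (V g) alpha g * V g b
        + alpha g * covV V g (V g) b
        + grad alpha g b = 0) /\
     (* (iii) *)
     alpha g * wedge12 (V g) (dV V g)
     + (2 * alpha g - codiff V g) * (1 - alpha g ^ 2)
     + alpha g * vder (V g) alpha g = 0).
Proof.
  intros HV Ha. exact (main V alpha HV Ha).
Qed.
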